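(* Let $q\ge 1$ and $s \ge 0$ be integers and assume that the polynomials $L_0,\dots,L_q$ defined in the context are linearly independent. For $k=0,\dots,q$ and $m=0,\dots,2^s-1$ define $$e_{k,m}(z) = \frac{1}{\sqrt{(2k+1)2^s}}\, r_q^m(z2^{-s})\, D_q^{-1}(z2^{-s})\, L_k(z2^{-s}), \qquad \tilde e_{k,m}(z) = D_q^{2^s}(z2^{-s})\, e_{k,m}(z),$$ and $\Pi^m = \{\tilde e_{0,m},\dots,\tilde e_{q,m}\}$. Then $$\dim \operatorname{span} \bigcup_{m=0}^{2^s-1}\Pi^m = q\,2^s + 1.$$
   Context: $N_q(z) = \sum_{j=0}^q \frac{(2q-j)!\,q!}{(2q)!\,j!\,(q-j)!} z^j$, $D_q(z) = N_q(-z)$, $r_q = N_q/D_q$ (diagonal Padé approximant of $e^z$). For scalar $z$ (not a zero of $D_q$), let $C_0(z),\dots,C_q(z)$ be the solution of the linear system, with $\tilde C_k = C_k/(2k+1)$, $\tilde C_{q+1}=0$: $\sum_{k=0}^q(-1)^k(2k+1)\tilde C_k = 1$ and, for $j=1,\dots,q$, $-z\tilde C_{j-1} + (4j+2)\tilde C_j + z\tilde C_{j+1} = 0$. These are rational functions of the form $C_k(z) = L_k(z)/D_q(z)$ with $L_k$ polynomials of degree at most $q$, and $\sum_k C_k(z) = r_q(z)$. The functions $\tilde e_{k,m}$ are polynomials of degree at most $q2^s$. *)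

(* Defs.v *)
From HB Require Import structures.
From mathcomp Require Import all_boot all_order all_algebra.
From mathcomp Require Import qpoly.
Set Implicit Arguments. Unset Strict Implicit. Unset Printing Implicit Defensive.
Import Order.TTheory GRing.Theory Num.Theory.
Local Open Scope ring_scope.

Section PadeDefs.
Variable C : numClosedFieldType.

Definition Nq (q : nat) : {poly C} :=
  \poly_(j < q.+1)
    (((2 * q - j)`! * q`!)%:R / (((2 * q)`! * j`! * (q - j)`!)%:R)).

Definition Dq (q : nat) : {poly C} := Nq q \Po (- 'X).

(* r_q = N_q / D_q, as a scalar function (only used where D_q(z) <> 0) *)
Definition rq (q : nat) (z : C) : C := (Nq q).[z] / (Dq q).[z].

Definition Ck (q : nat) (L : nat -> {poly C}) (z : C) (k : nat) : C :=
  (L k).[z] / (Dq q).[z].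

Definition Ctil (q : nat) (L : nat -> {poly C}) (z : C) (k : nat) : C :=
  if (k <= q)%N then Ck q L z k / (2 * k + 1)%:R else 0.

Definition Csystem (q : nat) (L : nat -> {poly C}) (z : C) : Prop :=
  (\sum_(k < q.+1) (-1) ^+ k * (2 * k + 1)%:R * Ctil q L z k = 1) /\
  (forall j : nat, (1 <= j <= q)%N ->
     - z * Ctil q L z j.-1 + (4 * j + 2)%:R * Ctil q L z j
       + z * Ctil q L z j.+1 = 0).

(* tilde e_{k,m}(z) = D_q^{2^s}(z 2^-s) e_{k,m}(z), where
   e_{k,m}(z) = ((2k+1) 2^s)^{-1/2} r_q^m(z 2^-s) D_q^{-1}(z 2^-s) L_k(z 2^-s).
   Since m <= 2^s - 1, this is the polynomial
   ((2k+1)2^s)^{-1/2} N_q^m(w) D_q^{2^s-1-m}(w) L_k(w),  w = z 2^-s. *)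
Definition etilde (q s : nat) (L : nat -> {poly C}) (k m : nat) : {poly C} :=
  (sqrtC ((2 * k + 1) * 2 ^ s)%:R)^-1 *:
    ((Nq q ^+ m * Dq q ^+ (2 ^ s - 1 - m) * L k) \Po ((2 ^ s)%:R^-1 *: 'X)).

(* a size bound large enough that embedding into {poly_n C} loses nothing *)
Definition ebound (q s : nat) (L : nat -> {poly C}) : nat :=
  (\sum_(k < q.+1) \sum_(m < 2 ^ s) size (etilde q s L k m))%N.

Definition PiFamily (q s : nat) (L : nat -> {poly C}) : seq {poly_(ebound q s L) C} :=
  [seq npolyp (ebound q s L) (etilde q s L k m)
     | k <- iota 0 q.+1, m <- iota 0 (2 ^ s)].

End PadeDefs.
Arguments Nq {C} q.
Arguments Dq {C} q.
Arguments rq {C} q z.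

(* Main.v *)
Require Import Defs.
From HB Require Import structures.
From mathcomp Require Import all_boot all_order all_algebra.
From mathcomp Require Import qpoly.
From mathcomp Require Import ring lra zify.
Import Order.TTheory GRing.Theory Num.Theory.
Local Open Scope ring_scope.

Lemma fact_neq0 (C : numClosedFieldType) n : (n`!)%:R != 0 :> C.
Proof. by rewrite pnatr_eq0 -lt0n fact_gt0. Qed.

Lemma coefNq (C : numClosedFieldType) q j : (Nq q : {poly C})`_j =
  if (j < q.+1)%N then
    ((2 * q - j)`! * q`!)%:R / (((2 * q)`! * j`! * (q - j)`!)%:R) else 0.
Proof. by rewrite /Nq coef_poly. Qed.

Lemma coefN_rec (C : numClosedFieldType) q j :
  (j.+1)%:R * ((2 * q)%:R - j%:R) * (Nq q : {poly C})`_j.+1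
  = (q%:R - j%:R) * (Nq q)`_j.
Proof.
rewrite !coefNq.
case: (ltnP j q) => hjq.
  rewrite ltnS hjq ltnW //.
  have [a ->] : exists a, q = (j + a.+1)%N by exists (q - j.+1)%N; lia.
  have e1 : (2 * (j + a.+1) - j.+1 = (j + 2 * a).+1)%N by lia.
  have e2 : (2 * (j + a.+1) - j = (j + 2 * a).+2)%N by lia.
  have e3 : ((j + a.+1) - j.+1 = a)%N by lia.
  have e4 : ((j + a.+1) - j = a.+1)%N by lia.
  rewrite e1 e2 e3 e4 -natrB; last by lia.
  rewrite -natrB; last by lia.
  rewrite e2 e4 !factS !natrM.
  have := @fact_neq0 C; move=> hf.
  field.
  by rewrite !hf ?nat1r ?pnatr_eq0.
case: (ltnP q j) => h2.
  rewrite !ifF ?mulr0 //; try lia.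
have -> : j = q by apply/eqP; rewrite eqn_leq h2 hjq.
by rewrite subrr mul0r ifF ?mulr0 // ltnn.
Qed.

Lemma lincomb (R : comRingType) (l r L R' c : R) :
  l = r -> L - R' = c * (l - r) -> L = R'.
Proof. by move=> -> /eqP; rewrite subrr mulr0 subr_eq0 => /eqP. Qed.

Lemma sizeN (C : numClosedFieldType) q : size (Nq q : {poly C}) = q.+1.
Proof.
rewrite /Nq size_poly_eq //=.
by rewrite mulf_neq0 ?invr_neq0 // !natrM !mulf_neq0 ?fact_neq0.
Qed.

Lemma coefN0 (C : numClosedFieldType) q : (Nq q : {poly C})`_0 = 1.
Proof.
rewrite coefNq /= !subn0 fact0 muln1 divff // natrM mulf_neq0 ?fact_neq0 //.
Qed.

Lemma odeN (C : numClosedFieldType) q :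
  'X * (Nq q : {poly C})^`()^`() =
    (2 * q)%:R * (Nq q)^`() + 'X * (Nq q)^`() - q%:R * Nq q.
Proof.
apply/polyP => i; rewrite !(coefD, coefB, coefXM, mulr_natl, coefMn, coef_deriv).
case: i => [|k] /=.
  have := coefN_rec C q 0; rewrite subr0 mul1r.
  rewrite subr0 => h.
  rewrite coefN coefMn; apply: (@lincomb _ _ _ _ _ (-1) h); ring.
have := coefN_rec C q k.+1 => h.
rewrite coefN coefMn; apply: (@lincomb _ _ _ _ _ (-1) h); ring.
Qed.

Lemma sizeD (C : numClosedFieldType) q : size (Dq q : {poly C}) = q.+1.
Proof. by rewrite /Dq size_comp_poly2 ?sizeN // size_polyN size_polyX. Qed.

Lemma comp_natM (C : numClosedFieldType) (n : nat) (p r : {poly C}) :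
  (n%:R * p) \Po r = n%:R * (p \Po r).
Proof.
elim: n => [|n IH]; first by rewrite !mul0r comp_poly0.
by rewrite -addn1 natrD !mulrDl !mul1r comp_polyD IH.
Qed.

Lemma comp_polyN' (C : numClosedFieldType) (p r : {poly C}) :
  (- p) \Po r = - (p \Po r).
Proof. by rewrite -sub0r comp_polyB comp_poly0 sub0r. Qed.

Lemma coprimeND (C : numClosedFieldType) q : (1 <= q)%N ->
  coprimep (Nq q : {poly C}) (Dq q).
Proof.
move=> q1.
apply: Pdiv.ClosedField.root_coprimep => a /rootP Na.
apply/negP => /eqP Da.
set N := Nq q in Na *.
set D := Dq q in Da *.
set A := N^`() \Po - 'X.
set B := N^`()^`() \Po - 'X.
have hD1 : D^`() = - A by rewrite /D /Dq deriv_comp derivN derivX mulrN1.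
have hD2 : D^`()^`() = B by rewrite hD1 derivN /A deriv_comp derivN derivX mulrN1 opprK.
have odeD : - 'X * B = (2 * q)%:R * A + (- 'X) * A - q%:R * D.
  have := congr1 (comp_poly (- 'X)) (odeN C q).
  rewrite !(comp_polyD, comp_polyN', comp_natM, comp_polyM) comp_polyX.
  by move=> h; exact: h.
set W := N * D^`() - N^`() * D + N * D.
have hW1 : W^`() = N * B - N^`()^`() * D + N^`() * D - N * A.
  rewrite /W !(derivD, derivN, derivM) hD2 hD1; ring.
have hW : 'X * W^`() = (2 * q)%:R * W.
  rewrite hW1.
  have e1 : 'X * (N * B - N^`()^`() * D + N^`() * D - N * A) =
    - N * (- 'X * B) - ('X * N^`()^`()) * D + 'X * (N^`() * D - N * A) by ring.
  rewrite e1 odeD odeN -/N /W hD1; ring.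
have hWc : forall j, j != (2 * q)%N -> W`_j = 0.
  move=> [|j] hj.
    have := congr1 (fun p : {poly C} => p`_0) hW => /=.
    rewrite coefXM /= mulr_natl coefMn => /esym/eqP.
    by rewrite mulrn_eq0 => /orP [/eqP h|/eqP //]; lia.
  have := congr1 (fun p : {poly C} => p`_j.+1) hW => /=.
  rewrite coefXM /= mulr_natl coefMn coef_deriv.
  have [->//|Wn0] := eqVneq W`_j.+1 0.
  move=> /(mulrIn Wn0) h.
  by move: hj; rewrite h eqxx.
have WE : W = W`_(2 * q) *: 'X^(2 * q).
  apply/polyP => i; rewrite coefZ coefXn.
  have [->|hi] := eqVneq i (2 * q)%N; first by rewrite mulr1.
  by rewrite mulr0 hWc.
have Wa : W.[a] = 0 by rewrite /W !hornerE Na Da; ring.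
have a0 : a != 0.
  apply/eqP => a0; move: Na; rewrite a0 horner_coef0 coefN0 => /eqP.
  by rewrite oner_eq0.
have W2q : W`_(2 * q) != 0.
  have sN := sizeN C q; have sD := sizeD C q.
  have N0 : N != 0 by rewrite -size_poly_gt0 sN.
  have D0 : D != 0 by rewrite -size_poly_gt0 sD.
  have sD1 : (size D^`() <= q)%N by have := lt_size_deriv D0; rewrite sD ltnS.
  have sN1 : (size N^`() <= q)%N by have := lt_size_deriv N0; rewrite sN ltnS.
  rewrite /W !coefD coefN.
  rewrite [(N * D^`())`_ _]nth_default; last first.
    apply: leq_trans (size_polyMleq _ _) _; rewrite sN; lia.
  rewrite [(N^`() * D)`_ _]nth_default; last first.
    apply: leq_trans (size_polyMleq _ _) _; rewrite sD; lia.
  rewrite subrr add0r.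
  have sND : size (N * D) = (2 * q).+1 by rewrite size_mul // sN sD; lia.
  have := lead_coefM N D; rewrite lead_coefE sND /= => ->.
  by rewrite mulf_neq0 // lead_coef_eq0.
move: Wa; rewrite WE hornerZ hornerXn => /eqP; rewrite mulf_eq0 expf_eq0.
by rewrite (negPf W2q) (negPf a0) andbF.
Qed.

Lemma bezoutND (C : numClosedFieldType) q : (1 <= q)%N ->
  exists u v : {poly C}, u * Dq q + v * Nq q = 1.
Proof.
move=> q1; have := @coprimeND C q q1; rewrite coprimep_sym.
move/Bezout_coprimepP => [[u1 u2] /=]; rewrite -size_poly_eq1.
case/size_poly1P => c c0 hc.
exists (c^-1 *: u1), (c^-1 *: u2).
by rewrite -!scalerAl -scalerDr hc scale_polyC mulVf.
Qed.

Lemma decomp (C : numClosedFieldType) q K (F : {poly C}) : (1 <= q)%N ->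
  (q <= K.+1)%N -> (size F <= K + q + 1)%N ->
  exists r s : {poly C}, [/\ (size r <= q)%N, (size s <= K.+1)%N & F = r * Dq q + s * Nq q].
Proof.
move=> q1 qK sF.
have [u [v huv]] := @bezoutND C q q1.
set N := Nq q in huv *; set D := Dq q in huv *.
have sN := sizeN C q; have sD := sizeD C q.
have N0 : N != 0 by rewrite -size_poly_gt0 sN.
set Q := (F * u) %/ N; set r := (F * u) %% N.
have e : F * u = Q * N + r by apply: divp_eq.
have sr : (size r <= q)%N by have := ltn_modpN0 (F * u) N0; rewrite -/r sN ltnS.
exists r, (F * v + Q * D); split => //; last first.
  by rewrite -[F in LHS]mulr1 -huv mulrDr mulrA e; ring.
set s := F * v + Q * D.
have es : s * N = F - r * D.
  have : F = r * D + s * N by rewrite -[F in LHS]mulr1 -huv mulrDr mulrA e /s; ring.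
  by move=> {1}->; ring.
have [->|s0] := eqVneq s 0; first by rewrite size_poly0.
have : (size (s * N)%R <= K + q + 1)%N.
  rewrite es; apply: leq_trans (size_polyD _ _) _; rewrite size_polyN geq_max sF /=.
  apply: leq_trans (size_polyMleq _ _) _; rewrite sD; move: (size r) sr => nr hnr; lia.
rewrite size_mul // sN; move: (size s) => ns; lia.
Qed.

Lemma spanND (C : numClosedFieldType) q n (F : {poly C}) : (1 <= q)%N ->
  (size F <= q * n.+1 + 1)%N ->
  exists P : nat -> {poly C}, (forall m, (size (P m) <= q.+1)%N) /\
    F = \sum_(m < n.+1) Nq q ^+ m * Dq q ^+ (n - m) * P m.
Proof.
move=> q1; elim: n F => [|n IH] F sF.
  exists (fun _ => F); split; first by move=> _; rewrite muln1 addn1 in sF.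
  by rewrite big_ord1 /= !expr0 !mul1r.
have [r [s [sr ss ->]]] := @decomp C q (q * n.+1) F q1 ltac:(nia) ltac:(nia).
have [R [sR ->]] := IH r ltac:(nia).
have [S [sS ->]] := IH s ltac:(nia).
exists (fun m => (if (m < n.+1)%N then R m else 0) + (if m is m'.+1 then S m' else 0)).
split.
  move=> m; apply: leq_trans (size_polyD _ _) _; rewrite geq_max.
  by case: ifP => _; case: m => [|m]; rewrite ?size_poly0 ?sR ?sS.
rewrite (eq_bigr _ (fun m _ => mulrDr _ _ _)) big_split /=.
rewrite [X in _ = X + _]big_ord_recr [X in _ = _ + X]big_ord_recl /= ltnn mulr0 addr0 mulr0 add0r.
rewrite !mulr_suml; congr (_ + _); apply: eq_bigr => i _ /=.
  rewrite ltn_ord subSn; last by have := ltn_ord i; lia.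
  rewrite exprS; ring.
by rewrite subSS exprS; ring.
Qed.

Definition Lcoef (C : numClosedFieldType) q (L : nat -> {poly C}) (P : {poly C}) (k : nat) : C :=
  coord [tuple npolyp q.+1 (L i) | i < q.+1] (inord k) (npolyp q.+1 P).
Arguments Lcoef {C}.

Lemma Lspan (C : numClosedFieldType) q (L : nat -> {poly C}) :
  (forall k, (k <= q)%N -> (size (L k) <= q.+1)%N) ->
  (forall a : nat -> C,
     \sum_(k < q.+1) a k *: L k = 0 -> forall k, (k <= q)%N -> a k = 0) ->
  forall P : {poly C}, (size P <= q.+1)%N ->
  P = \sum_(k < q.+1) Lcoef q L P k *: L k.
Proof.
move=> sL Lind P sP.
pose X : (q.+1).-tuple {poly_(q.+1) C} := [tuple npolyp q.+1 (L i) | i < q.+1].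
have XE : forall i : 'I_q.+1, X`_i = npolyp q.+1 (L i).
  by move=> i; rewrite -tnth_nth tnth_mktuple.
have valX : forall k : 'I_q.+1 -> C,
    polyn (\sum_(i < q.+1) k i *: X`_i) = \sum_(i < q.+1) k i *: L i.
  move=> k; rewrite linear_sum; apply: eq_bigr => i _.
  by rewrite linearZ /= XE npolypK // sL // -ltnS.
have fX : free X.
  apply/freeP => k hk i.
  have := Lind (fun j => if (j < q.+1)%N then k (inord j) else 0).
  have -> : \sum_(j < q.+1) (if (j < q.+1)%N then k (inord j) else 0) *: L j
            = \sum_(i < q.+1) k i *: L i.
    by apply: eq_bigr => j _; rewrite ltn_ord inord_val.
  rewrite -valX hk linear0 => /(_ erefl i); rewrite ltn_ord inord_val.
  by apply; rewrite -ltnS.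
have spX : (span X = fullv)%VS.
  apply/eqP; rewrite eqEdim subvf dim_polyn.
  move: fX; rewrite /free => /eqP ->; rewrite size_tuple; exact: ltnSn.
have hm : npolyp q.+1 P \in span X by rewrite spX memvf.
have e := congr1 (fun x : {poly_q.+1 C} => (x : {poly C})) (coord_span hm).
rewrite valX npolypK // in e.
rewrite [LHS]e.
by apply: eq_bigr => i _; rewrite /Lcoef inord_val.
Qed.

Lemma factA (C : numClosedFieldType) q s (L : nat -> {poly C}) : (1 <= q)%N ->
  (forall k, (k <= q)%N -> (size (L k) <= q.+1)%N) ->
  (forall a : nat -> C,
     \sum_(k < q.+1) a k *: L k = 0 -> forall k, (k <= q)%N -> a k = 0) ->
  forall F : {poly C}, (size F <= q * 2 ^ s + 1)%N ->
  exists a : nat -> nat -> C,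
    F = \sum_(m < 2 ^ s) \sum_(k < q.+1) a m k *: etilde q s L k m.
Proof.
move=> q1 sL Lind F sF.
set mu : C := (2 ^ s)%:R.
have mu0 : mu != 0 by rewrite pnatr_eq0 -lt0n expn_gt0.
set G := F \Po (mu *: 'X).
have sX : size (mu *: 'X : {poly C}) = 2 by rewrite size_scale // size_polyX.
have sG : size G = size F by rewrite size_comp_poly2.
have M1 : (2 ^ s)%N = (2 ^ s).-1.+1 by rewrite prednK // expn_gt0.
have [P [sP GE]] := @spanND C q (2 ^ s).-1 G q1 ltac:(rewrite sG -M1 //).
have FE : F = G \Po ((2 ^ s)%:R^-1 *: 'X).
  rewrite /G -comp_polyA comp_polyZ comp_polyX scalerA divff // scale1r.
  by rewrite comp_polyXr.
have ck0 : forall k, (sqrtC ((2 * k + 1) * 2 ^ s)%:R)^-1 != 0 :> C.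
  move=> k; rewrite invr_eq0 sqrtC_eq0 pnatr_eq0 muln_eq0 negb_or.
  by rewrite addn1 /= -lt0n expn_gt0.
exists (fun m k => Lcoef q L (P m) k / (sqrtC ((2 * k + 1) * 2 ^ s)%:R)^-1).
rewrite [LHS]FE GE -M1 linear_sum; apply: eq_bigr => m _ /=.
rewrite {1}(@Lspan C q L sL Lind _ (sP m)) mulr_sumr linear_sum; apply: eq_bigr => k _ /=.
rewrite /etilde scalerA divfK // -scalerAr linearZ /= subn1.
by [].
Qed.
Lemma npolypD (C : numClosedFieldType) n (p r : {poly C}) :
  npolyp n (p + r) = npolyp n p + npolyp n r.
Proof.
apply/npolyP => i; rewrite raddfD /= coefD !coef_npolyp coefD.
by case: ifP; rewrite ?addr0.
Qed.

Lemma npolypZ (C : numClosedFieldType) n a (p : {poly C}) :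
  npolyp n (a *: p) = a *: npolyp n p.
Proof.
apply/npolyP => i; rewrite linearZ /= coefZ !coef_npolyp coefZ.
by case: ifP; rewrite ?mulr0.
Qed.

Lemma npolyp0 (C : numClosedFieldType) n : npolyp n (0 : {poly C}) = 0.
Proof. by apply/npolyP => i; rewrite coef_npolyp coef0 /= if_same. Qed.

Lemma npolyp_sum (C : numClosedFieldType) n I (r : seq I) (f : I -> {poly C}) :
  npolyp n (\sum_(i <- r) f i) = \sum_(i <- r) npolyp n (f i).
Proof.
elim: r => [|x r IH]; first by rewrite !big_nil npolyp0.
by rewrite !big_cons npolypD IH.
Qed.

Lemma predD_mono {a b c d : nat} : (a <= c)%N -> (b <= d)%N -> ((a + b).-1 <= (c + d).-1)%N.
Proof. lia. Qed.

Lemma size_etilde (C : numClosedFieldType) q s (L : nat -> {poly C}) k m :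
  (size (L k) <= q.+1)%N -> (m < 2 ^ s)%N ->
  (size (etilde q s L k m) <= q * 2 ^ s + 1)%N.
Proof.
move=> sLk hm.
apply: leq_trans (size_scale_leq _ _) _.
have mu0 : (2 ^ s)%:R^-1 != 0 :> C by rewrite invr_eq0 pnatr_eq0 -lt0n expn_gt0.
rewrite size_comp_poly2; last by rewrite size_scale // size_polyX.
have hq : (q * m + q * (2 ^ s - 1 - m) + q = q * 2 ^ s)%N.
  rewrite -mulnDr -[X in (_ + X)%N]muln1 -mulnDr; congr (q * _)%N; lia.
have h1 : (size ((Nq q ^+ m * Dq q ^+ (2 ^ s - 1 - m)%N)%R : {poly C})
             <= (q * m + q * (2 ^ s - 1 - m)).+1)%N.
  apply: leq_trans (size_polyMleq _ _) _.
  apply: leq_trans (predD_mono (size_poly_exp_leq _ _) (size_poly_exp_leq _ _)) _.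
  rewrite sizeN sizeD /=.
  move: (q * m)%N (q * (2 ^ s - 1 - m))%N => a b; lia.
apply: leq_trans (size_polyMleq _ _) _.
apply: leq_trans (predD_mono h1 sLk) _.
move: hq; move: (q * m)%N (q * (2 ^ s - 1 - m))%N (q * 2 ^ s)%N => a b c; lia.
Qed.

Theorem proposition4 (C : numClosedFieldType) (q s : nat) (L : nat -> {poly C}) :
  (1 <= q)%N ->
  (* L_0, ..., L_q are polynomials of degree at most q *)
  (forall k, (k <= q)%N -> (size (L k) <= q.+1)%N) ->
  (* C_k = L_k / D_q solves the linear system at every z with D_q(z) <> 0 *)
  (forall z : C, (Dq q).[z] != 0 -> Csystem q L z) ->
  (* L_0, ..., L_q are linearly independent *)
  (forall a : nat -> C,
     \sum_(k < q.+1) a k *: L k = 0 -> forall k, (k <= q)%N -> a k = 0) ->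
  \dim (span (PiFamily q s L)) = (q * 2 ^ s).+1.
Proof.
move=> q1 sL _ Lind.
set n0 := ebound q s L.
set T := (q * 2 ^ s)%N.
pose B := [seq npolyp n0 ('X^i : {poly C}) | i <- iota 0 T.+1].
have se : forall k m, (k <= q)%N -> (m < 2 ^ s)%N ->
    (size (etilde q s L k m) <= T + 1)%N.
  by move=> k m hk hm; apply: size_etilde => //; apply: sL.
have sen : forall k m, (k <= q)%N -> (m < 2 ^ s)%N ->
    (size (etilde q s L k m) <= n0)%N.
  move=> k m hk hm; rewrite /n0 /ebound.
  rewrite (bigD1 (Ordinal (hk : (k < q.+1)%N))) //= (bigD1 (Ordinal hm)) //=.
  by rewrite -addnA leq_addr.
have inPi : forall k m, (k <= q)%N -> (m < 2 ^ s)%N ->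
    npolyp n0 (etilde q s L k m) \in PiFamily q s L.
  move=> k m hk hm; rewrite /PiFamily.
  by apply: allpairs_f; rewrite mem_iota //= add0n ?ltnS.
have genA : forall F : {poly C}, (size F <= T + 1)%N ->
    npolyp n0 F \in span (PiFamily q s L).
  move=> F sF; have [a ->] := @factA C q s L q1 sL Lind _ sF.
  rewrite npolyp_sum; apply: rpred_sum => m _.
  rewrite npolyp_sum; apply: rpred_sum => k _.
  rewrite npolypZ; apply: rpredZ; apply: memv_span; apply: inPi => //.
  by rewrite -ltnS.
have genB : forall F : {poly C}, (size F <= T + 1)%N -> npolyp n0 F \in span B.
  move=> F sF.
  have -> : F = \sum_(i < T.+1) F`_i *: 'X^i.
    rewrite -poly_def; apply/polyP => i; rewrite coef_poly.
    by case: ltnP => // hi; rewrite nth_default //; apply: leq_trans sF _; rewrite addn1.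
  rewrite npolyp_sum; apply: rpred_sum => i _.
  rewrite npolypZ; apply: rpredZ; apply: memv_span; apply/mapP; exists (nat_of_ord i) => //.
  by rewrite mem_iota /= add0n.
have spE : span (PiFamily q s L) = span B.
  apply/eqP; rewrite eqEsubv; apply/andP; split.
    apply/span_subvP => x /allpairsP [[k m] [hk hm ->]].
    rewrite mem_iota in hk; rewrite mem_iota in hm.
    by move: hk hm => /= hk hm; apply: genB; apply: se; lia.
  apply/span_subvP => x /mapP [i hi ->].
  rewrite mem_iota /= add0n in hi.
  by apply: genA; rewrite size_polyXn addn1 ltnS -ltnS.
have n0T : (T < n0)%N.
  rewrite ltnNge; apply/negP => hn.
  have sXT : (size ('X^T : {poly C}) <= T + 1)%N by rewrite size_polyXn addn1.
  have [a e] := @factA C q s L q1 sL Lind _ sXT.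
  have := congr1 (fun p : {poly C} => p`_T) e; rewrite /= coefXn eqxx coef_sum.
  rewrite big1; first by move/eqP; rewrite oner_eq0.
  move=> m _; rewrite coef_sum big1 // => k _.
  rewrite coefZ nth_default ?mulr0 //.
  apply: leq_trans (sen _ _ _ _) hn; last by [].
  by rewrite -ltnS.
have sB : size B = T.+1 by rewrite size_map size_iota.
have BE : forall j, (j < size B)%N -> B`_j = npolyp n0 'X^j.
  move=> j hj; rewrite (nth_map 0%N) ?size_iota -?sB // nth_iota // -sB.
have fB : free B.
  change (free (in_tuple B)); apply/freeP => k hk i.
  have := congr1 (fun x : {poly_n0 C} => (x : {poly C})`_i) hk.
  rewrite /= coefn_sum coef0 (bigD1 i) //= big1 ?addr0.
    rewrite coefZ BE // coef_npolyp ifT; last by apply: leq_trans n0T; rewrite -sB.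
    by rewrite coefXn eqxx mulr1.
  move=> j hj; rewrite coefZ BE // coef_npolyp.
  case: ifP => _; last by rewrite mulr0.
  rewrite coefXn; case: eqP => [/val_inj e|_]; last by rewrite mulr0.
  by move: hj; rewrite e eqxx.
rewrite spE; move: fB; rewrite /free => /eqP ->; exact: sB.
Qed.
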